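(* No deterministic strategyproof mechanism for locating an obnoxious facility on $[0,1]$ has a bounded approximation ratio for the geometric mean of utilities: for every deterministic strategyproof mechanism $f$ there exist a number of agents $n$ and a profile $\mathbf x\in[0,1]^n$ with $\big(\prod_i|x_i-f(\mathbf x)|\big)^{1/n}=0$ while $\max_{z\in[0,1]}\big(\prod_i|x_i-z|\big)^{1/n}>0$.
   Context: Agents $i=1,\dots,n$ have private locations $x_i\in[0,1]$; a deterministic mechanism $f:[0,1]^n\to[0,1]$ outputs the facility location; utility $u(x_i,y)=|x_i-y|$. $f$ is strategyproof if for all $\mathbf x$, $i$, $x_i'$: $|x_i-f(\mathbf x)|\ge|x_i-f(x_i',\mathbf x_{-i})|$. The geometric-mean objective of $y$ is $\big(\prod_{i}|x_i-y|\big)^{1/n}$ (the limit $p\to0^+$ of the normalized power mean $(\frac1n\sum_i|x_i-y|^p)^{1/p}$), to be maximized. *)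

(* Defs.v *)
From mathcomp Require Import all_boot all_order all_algebra.
From mathcomp Require Import all_classical all_reals all_analysis.
Set Implicit Arguments. Unset Strict Implicit. Unset Printing Implicit Defensive.
Import Order.TTheory GRing.Theory Num.Theory.
Local Open Scope ring_scope.

Definition valid_profile (R : realType) (n : nat) (x : 'I_n -> R) : Prop :=
  forall i, 0 <= x i <= 1.

Definition update (R : realType) (n : nat) (x : 'I_n -> R) (i : 'I_n) (y : R)
  : 'I_n -> R := fun j => if j == i then y else x j.

Definition mechanism (R : realType) := forall n : nat, ('I_n -> R) -> R.

Definition mech_in_unit (R : realType) (f : mechanism R) : Prop :=
  forall n (x : 'I_n -> R), valid_profile x -> 0 <= f n x <= 1.

Definition strategyproof (R : realType) (f : mechanism R) : Prop :=
  forall n (x : 'I_n -> R) (i : 'I_n) (x' : R),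
    valid_profile x -> 0 <= x' <= 1 ->
    `|x i - f n (update x i x')| <= `|x i - f n x|.

Definition geo_mean (R : realType) (n : nat) (x : 'I_n -> R) (y : R) : R :=
  powR (\prod_(i < n) `|x i - y|) (n%:R^-1).

(* Main.v *)
Require Import Defs.
From mathcomp Require Import all_boot all_order all_algebra.
From mathcomp Require Import all_classical all_reals all_analysis.
From mathcomp Require Import lra.
Import Order.TTheory GRing.Theory Num.Theory.
Local Open Scope ring_scope.

Lemma oneD (R : realType) (g : R -> R) :
  (forall a, 0 <= a <= 1 -> 0 <= g a <= 1) ->
  (forall a a', 0 <= a <= 1 -> 0 <= a' <= 1 -> `|a - g a'| <= `|a - g a|) ->
  (forall a, 0 <= a <= 1 -> g a != a) ->
  g 1 < g 0 /\
  (forall a, 0 <= a <= 1 -> a < (g 0 + g 1) / 2 -> g a = g 0) /\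
  (forall a, 0 <= a <= 1 -> (g 0 + g 1) / 2 < a -> g a = g 1).
Proof.
move=> H01 Hsp Hne.
have i0 : 0 <= (0 : R) <= 1 by apply/andP; split; lra.
have i1 : 0 <= (1 : R) <= 1 by apply/andP; split; lra.
have up : forall a', 0 <= a' <= 1 -> g a' <= g 0.
  move=> a' ha'; have := Hsp 0 a' i0 ha'.
  have := H01 _ ha'; have := H01 _ i0.
  rewrite !sub0r !normrN => /andP[h1 h2] /andP[h3 h4].
  by rewrite !ger0_norm.
have lo : forall a', 0 <= a' <= 1 -> g 1 <= g a'.
  move=> a' ha'; have := Hsp 1 a' i1 ha'.
  have := H01 _ ha'; have := H01 _ i1.
  move=> /andP[h1 h2] /andP[h3 h4].
  rewrite !ger0_norm; [lra| lra| lra].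
have strict : g 1 < g 0.
  rewrite lt_neqAle lo //; case: eqVneq => //= E.
  have hg := H01 _ i0.
  have hc : 0 <= g 0 <= 1 by [].
  have := Hne _ hc; have := up _ hc; have := lo _ hc; rewrite E.
  by move=> h1 h2; rewrite eq_le h1 h2.
split => //; split.
- move=> a ha hm.
  have h := Hsp a 0 ha i0.
  have e1 : g 0 - a <= `|a - g 0| by rewrite -normrN opprB ler_norm.
  have := le_trans e1 h; have := up _ ha; have := lo _ ha.
  rewrite ler_normr => h1 h2 /orP[] h3; apply/eqP; rewrite eq_le h2 /=; lra.
- move=> a ha hm.
  have h := Hsp a 1 ha i1.
  have e1 : a - g 1 <= `|a - g 1| by rewrite ler_norm.
  have := le_trans e1 h; have := up _ ha; have := lo _ ha.
  rewrite ler_normr => h1 h2 /orP[] h3; apply/eqP; rewrite eq_le h1 andbT; lra.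
Qed.

Definition prof (R : realType) (a b : R) : 'I_2 -> R :=
  fun i => if (i : nat) == 0%N then a else b.
Arguments prof {R}.

Lemma prof_upd0 (R : realType) (a b a' : R) :
  update (prof a b) ord0 a' = prof a' b.
Proof.
by apply: funext => -[[|[|k]] Hk] //.
Qed.

Lemma prof_upd1 (R : realType) (a b b' : R) :
  update (prof a b) ord_max b' = prof a b'.
Proof.
by apply: funext => -[[|[|k]] Hk] //.
Qed.

Lemma geo2 (R : realType) (a b y : R) :
  geo_mean (prof a b) y = powR (`|a - y| * `|b - y|) (2%:R^-1).
Proof.
rewrite /geo_mean !big_ord_recr big_ord0 /=; congr powR; by rewrite mul1r.
Qed.

Theorem theorem7 (R : realType) (f : mechanism R) :
  mech_in_unit f -> strategyproof f ->
  exists (n : nat) (x : 'I_n -> R),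
    valid_profile x /\
    geo_mean x (f n x) = 0 /\
    exists z : R, 0 <= z <= 1 /\ 0 < geo_mean x z.
Proof.
move=> Hin Hsp; apply: contrapT => Hno.
pose F a b := f 2 (prof a b).
have valid : forall a b : R, 0 <= a <= 1 -> 0 <= b <= 1 -> valid_profile (prof a b).
  by move=> a b ha hb [[|[|k]] Hk].
have H01 : forall a b : R, 0 <= a <= 1 -> 0 <= b <= 1 -> 0 <= F a b <= 1.
  by move=> a b ha hb; apply: Hin; apply: valid.
have avoid : forall a b : R, 0 <= a <= 1 -> 0 <= b <= 1 ->
    F a b != a /\ F a b != b.
  move=> a b ha hb.
  have Hz : exists z : R, 0 <= z <= 1 /\ z != a /\ z != b.
    case: (eqVneq a 0) => [->|na].
    - case: (eqVneq b 1) => [->|nb].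
      + exists (1/2); split; first (apply/andP; split; lra).
        by split; apply/eqP; lra.
      + exists 1; split; first (apply/andP; split; lra).
        by split => //; apply/eqP; lra.
    - case: (eqVneq b 0) => [->|nb].
      + case: (eqVneq a 1) => [->|na1].
        * exists (1/2); split; first (apply/andP; split; lra).
          by split; apply/eqP; lra.
        * exists 1; split; first (apply/andP; split; lra).
          by split; [rewrite eq_sym | apply/eqP; lra].
      + exists 0; split; first (apply/andP; split; lra).
        by split; rewrite eq_sym.
  have Hpos : exists z : R, 0 <= z <= 1 /\ 0 < geo_mean (prof a b) z.
    case: Hz => z [hz [za zb]]; exists z; split => //.
    rewrite geo2; apply: powR_gt0; apply: mulr_gt0; rewrite normr_gt0 subr_eq0 eq_sym //.
  split; apply/eqP => E; apply: Hno; exists 2%N, (prof a b);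
    (split; [exact: valid|split => //]).
  - rewrite geo2 -/(F a b) E subrr normr0 mul0r powR0 //.
  - rewrite geo2 -/(F a b) E subrr normr0 mulr0 powR0 //.
have row : forall b : R, 0 <= b <= 1 ->
  F 1 b < F 0 b /\
  (forall a, 0 <= a <= 1 -> a < (F 0 b + F 1 b) / 2 -> F a b = F 0 b) /\
  (forall a, 0 <= a <= 1 -> (F 0 b + F 1 b) / 2 < a -> F a b = F 1 b).
  move=> b hb; apply: (@oneD R (fun a => F a b)).
  - by move=> a ha; apply: H01.
  - move=> a a' ha ha'; rewrite /F -(@prof_upd0 R a b a').
    have := Hsp 2%N (prof a b) ord0 a' (valid _ _ ha hb) ha'; by [].
  - by move=> a ha; case: (avoid a b ha hb).
have col : forall a : R, 0 <= a <= 1 ->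
  F a 1 < F a 0 /\
  (forall b, 0 <= b <= 1 -> b < (F a 0 + F a 1) / 2 -> F a b = F a 0) /\
  (forall b, 0 <= b <= 1 -> (F a 0 + F a 1) / 2 < b -> F a b = F a 1).
  move=> a ha; apply: (@oneD R (fun b => F a b)).
  - by move=> b hb; apply: H01.
  - move=> b b' hb hb'; rewrite /F -(@prof_upd1 R a b b').
    have := Hsp 2%N (prof a b) ord_max b' (valid _ _ ha hb) hb'; by [].
  - by move=> b hb; case: (avoid a b ha hb).
have i0 : 0 <= (0 : R) <= 1 by apply/andP; split; lra.
have i1 : 0 <= (1 : R) <= 1 by apply/andP; split; lra.
have [hA hB] := (H01 _ _ i0 i0, H01 _ _ i0 i1).
have [hC hD] := (H01 _ _ i1 i0, H01 _ _ i1 i1).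
move: hA hB hC hD (row _ i0) (row _ i1) (col _ i0) (col _ i1).
set A := F 0 0; set B := F 0 1; set C := F 1 0; set D := F 1 1.
move=> /andP[? ?] /andP[? ?] /andP[? ?] /andP[? ?].
move=> [CA [r0l r0r]] [DB [r1l r1r]] [BA [c0l c0r]] [DC [c1l c1r]].
pose a := (2 * A + D + C) / 4; pose b := (A + C + 2 * D) / 4.
have ha : 0 <= a <= 1 by apply/andP; split; rewrite /a; lra.
have hb : 0 <= b <= 1 by apply/andP; split; rewrite /b; lra.
have Fa0 : F a 0 = A by apply: r0l => //; rewrite /a; lra.
have Fa1 : F a 1 = D by apply: r1r => //; rewrite /a; lra.
have Fab1 : F a b = A.
  have [_ [cl _]] := col _ ha; rewrite cl // Fa0 // Fa1 /b; lra.
have F0b : F 0 b = A by apply: c0l => //; rewrite /b; lra.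
have F1b : F 1 b = D by apply: c1r => //; rewrite /b; lra.
have Fab2 : F a b = D.
  have [_ [_ rr]] := row _ hb; rewrite rr ?F1b // F0b /a; lra.
move: Fab1; rewrite Fab2 => E; lra.
Qed.
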